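(* Let $G$ be a connected graph. Then $\gamma_{cI}(G)=2$ if and only if $G\in\{K_{1,n},K_{2,n},K^*_{2,n}\}$ for some $n\ge1$, where $K^*_{2,n}$ is the graph obtained from the complete bipartite graph $K_{2,n}$ by joining (adding the edge between) the two vertices of its $2$-vertex partite set.
   Context: All graphs are finite and simple; $N(v)$ is the open neighborhood of $v$. For $f:V(G)\to\{0,1,2\}$ let $V_i=\{v: f(v)=i\}$ and $\omega(f)=\sum_v f(v)$. A covering Italian dominating function (CID function) of $G$ is an $f:V(G)\to\{0,1,2\}$ such that every vertex $v$ with $f(v)=0$ satisfies $\sum_{u\in N(v)}f(u)\ge 2$, and $V_0$ is an independent set. $\gamma_{cI}(G)$ is the minimum of $\omega(f)$ over all CID functions of $G$. *)

(* Defs.v *)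
From mathcomp Require Import all_boot.
Set Implicit Arguments. Unset Strict Implicit. Unset Printing Implicit Defensive.

Definition simple_graph (T : finType) (e : rel T) : Prop :=
  symmetric e /\ irreflexive e.

Definition connected_graph (T : finType) (e : rel T) : Prop :=
  0 < #|T| /\ forall x y : T, connect e x y.

Definition weight (T : finType) (f : {ffun T -> 'I_3}) : nat :=
  \sum_(v : T) (f v : nat).

Definition is_CID (T : finType) (e : rel T) (f : {ffun T -> 'I_3}) : bool :=
  [forall v : T, ((f v : nat) == 0) ==> (2 <= \sum_(u : T | e v u) (f u : nat))]
  && [forall u : T, forall v : T, (((f u : nat) == 0) && ((f v : nat) == 0)) ==> ~~ e u v].

(* gamma_cI: minimum weight of a CID function (the constant-2 function is
   always a CID function of weight 2|V|, so the default value is never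
   smaller than the true minimum). *)
Definition gamma_cI (T : finType) (e : rel T) : nat :=
  \big[minn/(2 * #|T|)]_(f : {ffun T -> 'I_3} | is_CID e f) weight f.

Definition isomorphic (T U : finType) (e : rel T) (e' : rel U) : Prop :=
  exists g : T -> U, bijective g /\ forall x y : T, e' (g x) (g y) = e x y.

Definition star_rel (n : nat) : rel 'I_(n.+1) :=
  fun x y => (x != y) && (((x : nat) == 0) || ((y : nat) == 0)).

(* K_{2,n} on 'I_(n+2): partite sets {0,1} and {2,...,n+1} *)
Definition K2n_rel (n : nat) : rel 'I_(n.+2) :=
  fun x y => ((x : nat) < 2) (+) ((y : nat) < 2).

Definition K2n_star_rel (n : nat) : rel 'I_(n.+2) :=
  fun x y => K2n_rel x y || ([&& (x : nat) < 2, (y : nat) < 2 & x != y]).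

(* Main.v *)
Require Import Defs.
From mathcomp Require Import all_boot.
From mathcomp Require Import zify.
Set Implicit Arguments. Unset Strict Implicit.

Lemma key (T : finType) (e : rel T) (f : {ffun T -> 'I_3}) v u : is_CID e f -> weight f <= 2 ->
  (f v : nat) = 0 -> (f u : nat) != 0 -> e v u.
Proof.
case/andP => /forallP H1 _ Hw Hv Hu.
have := H1 v; rewrite Hv eqxx /= => Hs.
apply/negPn/negP => Hn.
move: Hw; rewrite /weight (bigID (e v)) /= [X in _ + X](bigD1 u) //=.
move: Hs Hu; rewrite -lt0n. lia.
Qed.

Lemma lower (T : finType) (e : rel T) (f : {ffun T -> 'I_3}) : 1 < #|T| -> is_CID e f -> 2 <= weight f.
Proof.
move=> HT; case/andP=> /forallP H1 _.
case: (pickP (fun v => (f v:nat) == 0)) => [v /eqP Hv | Hn].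
- have := H1 v; rewrite Hv eqxx /= => Hs. rewrite /weight (bigID (e v)) /=.
  exact: leq_trans Hs (leq_addr _ _).
- rewrite /weight. apply: leq_trans HT _. rewrite -sum1_card.
  apply: leq_sum => i _; rewrite lt0n Hn //.
Qed.

Lemma gamma_le (T : finType) (e : rel T) (f : {ffun T -> 'I_3}) : is_CID e f -> gamma_cI e <= weight f.
Proof.
rewrite /gamma_cI => H.
elim: (index_enum _) (mem_index_enum f) => // x r IH; rewrite inE big_cons.
case/orP => [/eqP<- | Hr]. by rewrite H geq_minl.
case: (is_CID e x); last exact: IH.
exact: leq_trans (geq_minr _ _) (IH Hr).
Qed.

Lemma gamma_cases (T : finType) (e : rel T) :
  gamma_cI e = 2 * #|T| \/ exists f, is_CID e f /\ gamma_cI e = weight f.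
Proof.
rewrite /gamma_cI; apply: (big_ind (fun m => m = 2*#|T| \/ exists f, is_CID e f /\ m = weight f)).
- by left.
- by move=> x y Hx Hy; rewrite /minn; case: ltnP.
- by move=> f Hf; right; exists f.
Qed.

Definition sw (k : nat) (i j x : 'I_k) := if x == i then j else if x == j then i else x.
Lemma swK k (i j : 'I_k) : cancel (sw i j) (sw i j).
Proof.
move=> x; rewrite /sw.
case: (eqVneq x i) => [->|Hxi]; first by rewrite eqxx; case: eqVneq.
case: (eqVneq x j) => [->|Hxj]; first by rewrite eqxx.
by rewrite (negbTE Hxi) (negbTE Hxj).
Qed.

Lemma bij1 (T : finType) k (hk : #|T| = k) (a : T) (i : 'I_k) :
  exists g : T -> 'I_k, bijective g /\ g a = i.
Proof.
pose h x := cast_ord hk (enum_rank x).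
have bh : bijective h.
  exists (fun y => enum_val (cast_ord (esym hk) y)) => x; rewrite /h.
  by rewrite cast_ordK enum_rankK.
  by rewrite enum_valK cast_ordKV.
exists (fun x => sw (h a) i (h x)); split.
  apply: bij_comp => //; exists (sw (h a) i); exact: swK.
by rewrite /sw eqxx.
Qed.

Lemma bij2 (T : finType) k (hk : #|T| = k) (a b : T) (i j : 'I_k) :
  a != b -> i != j -> exists g : T -> 'I_k, [/\ bijective g, g a = i & g b = j].
Proof.
move=> Hab Hij; have [g0 [bg0 ga]] := bij1 hk a i.
exists (fun x => sw (g0 b) j (g0 x)); split.
- apply: bij_comp => //; exists (sw (g0 b) j); exact: swK.
- rewrite ga /sw. have -> : (i == g0 b) = false.
    apply/negbTE; rewrite -ga; apply/negP => /eqP/(bij_inj bg0)/eqP; exact/negP.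
  by rewrite (negbTE Hij).
- by rewrite /sw eqxx.
Qed.

Lemma indep (T : finType) (e : rel T) (f : {ffun T -> 'I_3}) u v : is_CID e f ->
  (f u : nat) = 0 -> (f v : nat) = 0 -> e u v = false.
Proof.
case/andP => _ /forallP H2 Hu Hv.
have := H2 u => /forallP/(_ v); rewrite Hu Hv eqxx /=; exact: negbTE.
Qed.

Lemma CID_intro (T : finType) (e : rel T) (f : {ffun T -> 'I_3}) :
  (forall v, (f v : nat) = 0 -> 2 <= \sum_(u | e v u) (f u : nat)) ->
  (forall u v, (f u : nat) = 0 -> (f v : nat) = 0 -> ~~ e u v) -> is_CID e f.
Proof.
move=> H1 H2; apply/andP; split.
  by apply/forallP => v; apply/implyP => /eqP; apply: H1.
apply/forallP => u; apply/forallP => v; apply/implyP => /andP[/eqP Hu /eqP Hv]; exact: H2.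
Qed.

Lemma transport (T U : finType) (e : rel T) (e' : rel U) (g : T -> U) f' :
  bijective g -> (forall x y, e' (g x) (g y) = e x y) -> is_CID e' f' ->
  is_CID e [ffun x => f' (g x)] /\ weight [ffun x => f' (g x)] = weight f'.
Proof.
move=> bg He Hf; split.
- apply: CID_intro.
  + move=> v; rewrite ffunE => Hv.
    case/andP: Hf => /forallP/(_ (g v)); rewrite Hv eqxx /= => Hs _.
    rewrite (reindex g (onW_bij _ bg)) /= in Hs.
    by under eq_bigl do rewrite -He; under eq_bigr do rewrite ffunE.
  + move=> u v; rewrite !ffunE => Hu Hv; rewrite -He (indep Hf Hu Hv) //.
- rewrite /weight (reindex g (onW_bij _ bg)) /=.
  by apply: eq_bigr => i _; rewrite ffunE.
Qed.

Definition o0 : 'I_3 := @Ordinal 3 0 isT.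
Definition o1 : 'I_3 := @Ordinal 3 1 isT.
Definition o2 : 'I_3 := @Ordinal 3 2 isT.

Definition fstar n : {ffun 'I_n.+1 -> 'I_3} := [ffun i : 'I_n.+1 => if (i : nat) == 0 then o2 else o0].
Definition fK n : {ffun 'I_n.+2 -> 'I_3} := [ffun i : 'I_n.+2 => if (i : nat) < 2 then o1 else o0].

Lemma fstar_ok n : is_CID (@star_rel n) (fstar n) /\ weight (fstar n) = 2.
Proof.
split.
- apply: CID_intro.
  + move=> v; rewrite ffunE; case: ifP => // Hv _.
    rewrite (bigD1 ord0) /=; last by rewrite /star_rel orbT andbT; apply/eqP => E; rewrite E in Hv.
    by rewrite ffunE eqxx.
  + move=> u v; rewrite !ffunE; case: ifP => // Hu _; case: ifP => // Hv _.
    by rewrite /star_rel Hu Hv andbF.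
- rewrite /weight (bigD1 ord0) //= ffunE eqxx big1 // => i Hi.
  rewrite ffunE; case: ifP => // /eqP H; case/negP: Hi; apply/eqP/val_inj => //.
Qed.

Lemma fK_ok n : is_CID (@K2n_rel n) (fK n) /\ is_CID (@K2n_star_rel n) (fK n) /\ weight (fK n) = 2.
Proof.
pose one : 'I_n.+2 := @Ordinal n.+2 1 isT.
have Hsum : forall (r : rel 'I_n.+2) v, r v ord0 -> r v one -> 2 <= \sum_(u | r v u) (fK n u : nat).
  move=> r v H0 H1; rewrite (bigD1 ord0) //= (bigD1 one) ?H1 //= /fK !ffunE /=.
  rewrite addnA; exact: leq_addr.
have Hind : forall u v : 'I_n.+2, (fK n u : nat) = 0 -> (fK n v : nat) = 0 -> ~~ (u < 2) /\ ~~ (v < 2).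
  by move=> u v; rewrite !ffunE; case: ifP => // Hu _; case: ifP => // Hv _.
have Hv2 : forall v : 'I_n.+2, (fK n v : nat) = 0 -> ~~ (v < 2).
  by move=> v; rewrite !ffunE; case: ifP.
split; [|split].
- apply: CID_intro.
  + move=> v /Hv2 /negbTE Hv; apply: Hsum; by rewrite /K2n_rel Hv.
  + by move=> u v Hu Hv; have [/negbTE a /negbTE b] := Hind u v Hu Hv; rewrite /K2n_rel a b.
- apply: CID_intro.
  + move=> v /Hv2 /negbTE Hv; apply: Hsum; by rewrite /K2n_star_rel /K2n_rel Hv.
  + by move=> u v Hu Hv; have [/negbTE a /negbTE b] := Hind u v Hu Hv; rewrite /K2n_star_rel /K2n_rel a b.
- rewrite /weight (bigD1 ord0) //= (bigD1 one) //= !ffunE /= big1 // => i /andP[Hi0 Hi1].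
  rewrite ffunE; case: ifP => // Hi; exfalso.
  move: Hi0 Hi1 Hi; rewrite -!val_eqE /=; case: (val i) => [|[|]] //.
Qed.

Lemma star_iso (T : finType) (e : rel T) n (c : T) : #|T| = n.+1 ->
  (forall x y, e x y = (x != y) && ((x == c) || (y == c))) -> isomorphic e (@star_rel n).
Proof.
move=> hk He; have [g [bg gc]] := bij1 hk c ord0.
exists g; split => // x y.
have E : forall z, ((g z : nat) == 0) = (z == c).
  move=> z; apply/idP/idP => [H|/eqP->]; last by rewrite gc.
  apply/eqP/(bij_inj bg); rewrite gc; exact/val_inj/eqP.
by rewrite /star_rel !E (inj_eq (bij_inj bg)) He.
Qed.

Lemma K2_iso (T : finType) (e : rel T) n (a b : T) : a != b -> #|T| = n.+2 ->
  (forall x y, e x y = (((x == a) || (x == b)) (+) ((y == a) || (y == b)))) ->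
  isomorphic e (@K2n_rel n).
Proof.
move=> Hab hk He; have [g [bg ga gb]] := bij2 hk Hab (isT : ord0 != @Ordinal n.+2 1 isT).
exists g; split => // x y.
have E : forall z, ((g z : nat) < 2) = ((z == a) || (z == b)).
  move=> z; apply/idP/idP => [H|/orP[/eqP->|/eqP->]]; last 2 first.
  - by rewrite ga. - by rewrite gb.
  move: H; case Hz: (val (g z)) => [|[|]] // _.
  - apply/orP; left; apply/eqP/(bij_inj bg); rewrite ga; exact/val_inj.
  - apply/orP; right; apply/eqP/(bij_inj bg); rewrite gb; exact/val_inj.
by rewrite /K2n_rel !E He.
Qed.

Lemma K2s_iso (T : finType) (e : rel T) n (a b : T) : a != b -> #|T| = n.+2 ->
  (forall x y, e x y = (((x == a) || (x == b)) (+) ((y == a) || (y == b)))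
      || [&& ((x == a) || (x == b)), ((y == a) || (y == b)) & x != y]) ->
  isomorphic e (@K2n_star_rel n).
Proof.
move=> Hab hk He; have [g [bg ga gb]] := bij2 hk Hab (isT : ord0 != @Ordinal n.+2 1 isT).
exists g; split => // x y.
have E : forall z, ((g z : nat) < 2) = ((z == a) || (z == b)).
  move=> z; apply/idP/idP => [H|/orP[/eqP->|/eqP->]]; last 2 first.
  - by rewrite ga. - by rewrite gb.
  move: H; case Hz: (val (g z)) => [|[|]] // _.
  - apply/orP; left; apply/eqP/(bij_inj bg); rewrite ga; exact/val_inj.
  - apply/orP; right; apply/eqP/(bij_inj bg); rewrite gb; exact/val_inj.
by rewrite /K2n_star_rel /K2n_rel !E (inj_eq (bij_inj bg)) He.
Qed.

Unset Implicit Arguments.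
Theorem proposition9 (T : finType) (e : rel T) :
  simple_graph e -> connected_graph e ->
  (gamma_cI e = 2 <->
   exists n : nat, 1 <= n /\
     (isomorphic e (@star_rel n) \/ isomorphic e (@K2n_rel n) \/
      isomorphic e (@K2n_star_rel n))).
Proof.
move=> [Hsym Hirr] [HT0 Hconn]; split.
- move=> Hg.
  have HT2 : 1 < #|T|.
    case: (ltnP 1 #|T|) => // H1.
    have Hc : is_CID e [ffun _ => o1].
      by apply: CID_intro => [v|u v]; rewrite ffunE.
    have := gamma_le Hc; rewrite Hg /weight.
    under eq_bigr do rewrite ffunE.
    rewrite sum1_card (_ : #|xpredT| = #|T|) //; lia.
  have [f [Hf Hw]] : exists f, is_CID e f /\ weight f = 2.
    case: (gamma_cases e) => [H|[f [Hf Hw]]]; first lia.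
    by exists f; split; last congruence.
  have Hw2 : weight f <= 2 by rewrite Hw.
  case: (pickP (fun c => (f c : nat) == 2)) => [c /eqP Hc | Hno].
  + have Z : forall u, u != c -> (f u : nat) = 0.
      move=> u Hu; move: Hw; rewrite /weight (bigD1 c) //= [X in _ + X](bigD1 u) //=.
      rewrite Hc; lia.
    exists #|T|.-1; split; first lia.
    left; apply: (star_iso (c := c)); first lia.
    move=> x y.
    case: (eqVneq x c) => [->|Hxc].
      case: (eqVneq c y) => [<-|Hcy] /=; first by rewrite Hirr.
      rewrite Hsym; apply: key Hf Hw2 _ _; [apply: Z; by rewrite eq_sym | by rewrite Hc].
    case: (eqVneq y c) => [->|Hyc] /=.
      by rewrite Hxc; apply: key Hf Hw2 _ _; [apply: Z | rewrite Hc].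
    by rewrite andbF (indep Hf (Z _ Hxc) (Z _ Hyc)).
  + have Hle1 : forall u, (f u : nat) <= 1.
      move=> u; have := Hno u; have := ltn_ord (f u); rewrite /=; lia.
    case: (pickP (fun a => (f a : nat) != 0)) => [a Ha | Hna]; last first.
      move: Hw; rewrite /weight big1 // => i _; apply/eqP; move: (Hna i) => /= /negbFE //.
    case: (pickP (fun b => (b != a) && ((f b : nat) != 0))) => [b /andP[Hba Hb] | Hnb]; last first.
      move: Hw; rewrite /weight (bigD1 a) //= big1 ?addn0; first by have := Hle1 a; lia.
      move=> i Hi; apply/eqP; move: (Hnb i); rewrite /= Hi /=; exact: negbFE.
    have Z : forall u, u != a -> u != b -> (f u : nat) = 0.
      move=> u Hua Hub; move: Hw; rewrite /weight (bigD1 a) //= [X in _ + X](bigD1 b) //=.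
      rewrite [X in _ + (_ + X)](bigD1 u) /=; last by rewrite Hua Hub.
      move: Ha Hb; lia.
    have Zi : forall u, ((f u : nat) == 0) = ~~ ((u == a) || (u == b)).
      move=> u; case: (eqVneq u a) => [->|Hua]; first by rewrite (negbTE Ha).
      case: (eqVneq u b) => [->|Hub]; first by rewrite (negbTE Hb).
      by rewrite Z.
    have Hab : a != b by rewrite eq_sym.
    have Edge : forall x y, e x y = (((x == a) || (x == b)) (+) ((y == a) || (y == b)))
      || [&& e a b, ((x == a) || (x == b)), ((y == a) || (y == b)) & x != y].
      move=> x y; case Hx: ((x == a) || (x == b)); case Hy: ((y == a) || (y == b)) => /=.
      * case/orP: Hx => /eqP->; case/orP: Hy => /eqP->;
          rewrite ?eqxx ?Hirr ?andbF ?Hab ?andbT //.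
        by rewrite Hsym eq_sym Hab andbT.
      * rewrite Hsym; apply: key Hf Hw2 _ _; [by apply/eqP; rewrite Zi Hy | by rewrite Zi Hx].
      * apply: key Hf Hw2 _ _; [by apply/eqP; rewrite Zi Hx | by rewrite Zi Hy].
      * rewrite andbF; apply: (indep (u:=x) (v:=y) Hf); apply/eqP; by rewrite Zi ?Hx ?Hy.
    case: (pickP (fun v => (f v : nat) == 0)) => [v Hv | Hnz].
    * have Hva : v != a by apply: contraTneq Hv => ->.
      have Hvb : v != b by apply: contraTneq Hv => ->.
      have H3 : 2 < #|T|.
        apply/card_gt2P; exists a, b, v; split => //; split => //; by rewrite eq_sym.
      exists #|T|.-2; split; first lia.
      right; case B: (e a b); [right|left].
      - apply: (K2s_iso Hab); first lia.
        by move=> x y; rewrite Edge B.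
      - apply: (K2_iso Hab); first lia.
        by move=> x y; rewrite Edge B /= orbF.
    * have Hall : forall u, (u == a) || (u == b).
        move=> u; have := Hnz u; rewrite Zi /=; exact: negbFE.
      have Heab : e a b.
        case/connectP: (Hconn a b) => p; case: p => [_ /eqP|w p] /=.
          by rewrite eq_sym (negbTE Hab).
        case/andP => Haw _ _; case/orP: (Hall w) => /eqP Hw'; last by rewrite -Hw'.
        by rewrite Hw' Hirr in Haw.
      have Hcard : #|T| = 2.
        have := card2 a b; rewrite Hab => <-; apply: eq_card => u; rewrite !inE /=; exact/esym/Hall.
      exists 1; split => //; left; apply: (star_iso (c := a)); first by rewrite Hcard.
      move=> x y.
      case/orP: (Hall x) => /eqP->; case/orP: (Hall y) => /eqP->.
      + by rewrite Hirr eqxx.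
      + by rewrite Heab Hab eqxx.
      + by rewrite Hsym Heab eqxx orbT andbT eq_sym.
      + by rewrite Hirr eqxx.
- case=> n [Hn Hiso].
  have fin : forall (U : finType) (e' : rel U) (f' : {ffun U -> 'I_3}),
      1 < #|U| -> isomorphic e e' -> is_CID e' f' -> weight f' = 2 -> gamma_cI e = 2.
    move=> U e' f' HU [g [bg He]] Hf' Hw'.
    have [Hf Hw] := transport bg He Hf'.
    have HT2 : 1 < #|T| by rewrite (bij_eq_card bg).
    apply/eqP; rewrite eqn_leq; apply/andP; split.
      by rewrite -Hw' -Hw; apply: gamma_le.
    case: (gamma_cases e) => [->|[f0 [Hf0 ->]]]; first lia.
    exact: lower HT2 Hf0.
  have [Hk1 [Hk2 Hkw]] := fK_ok n.
  have [Hs1 Hsw] := fstar_ok n.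
  case: Hiso => [H|[H|H]].
  + by apply: (fin _ _ _ _ H Hs1 Hsw); rewrite card_ord.
  + by apply: (fin _ _ _ _ H Hk1 Hkw); rewrite card_ord.
  + by apply: (fin _ _ _ _ H Hk2 Hkw); rewrite card_ord.
Qed.
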